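(* Let $F$ be a field, let $X$ be a topological space and let $X_1, X_2 \subseteq X$ be subspaces with $\mathrm{cl}_X(X_1) \cap \mathrm{cl}_X(X_2) = \emptyset$. Let $q \geq 0$ be an integer, and assume the singular homology groups $H_q(X_1;F)$, $H_q(X_2;F)$, $H_q(X;F)$ are finite-dimensional. Let $\rho_i : H_q(X_i;F) \to H_q(X;F)$ ($i=1,2$) be induced by the inclusions, and let $\Gamma = \{ (s_1,s_2) \in H_q(X_1;F) \oplus H_q(X_2;F) : \rho_1(s_1) = \rho_2(s_2) \}$. Consider the persistent homology $\mathcal{P}_q(\mathcal{G}_1) : 0 \to H_q(X_1;F) \to H_q(X_1 \cup X_2;F) \to H_q(X;F)$ of the filtration $\mathcal{G}_1 : \emptyset \subseteq X_1 \subseteq X_1 \cup X_2 \subseteq X$ (indexed $0,1,2,3$, maps induced by inclusions). Then the number of barcodes $(3,+\infty)$ in $\mathcal{P}_q(\mathcal{G}_1)$ equals $$\dim_F H_q(X;F) - \dim_F H_q(X_1;F) - \dim_F H_q(X_2;F) + \dim_F \Gamma.$$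
   Context: Homology is singular homology with coefficients in $F$. For a filtration $\emptyset = Y_0 \subseteq Y_1 \subseteq \cdots \subseteq Y_n$, $\rho_{i,j} : H_q(Y_i;F) \to H_q(Y_j;F)$ denotes the map induced by inclusion. An element $s \in H_q(Y_i;F)$ is born at $i$ if $s \notin \operatorname{im}(\rho_{i-1,i})$; it dies at $j$ if $\rho_{i,j-1}(s) \notin \operatorname{im}(\rho_{i-1,j-1})$ and $\rho_{i,j}(s) \in \operatorname{im}(\rho_{i-1,j})$, and its death is $+\infty$ if it is still alive at $n$. The pair (birth, death) is its persistence barcode; the barcodes of the persistent homology form a multiset (the interval decomposition of the persistence module), and ''the number of barcodes $(3,+\infty)$'' is the multiplicity of the bar born at index $3$ that never dies. *)

(* Defs.v *)
From HB Require Import structures.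
From mathcomp Require Import all_boot all_order all_algebra.
From mathcomp Require Import all_classical all_reals all_analysis.
From mathcomp Require Import Rstruct Rstruct_topology.

Set Implicit Arguments.
Unset Strict Implicit.
Unset Printing Implicit Defensive.
Import Order.TTheory GRing.Theory Num.Theory.

Local Open Scope ring_scope.
Local Open Scope classical_set_scope.

Notation RR := Rdefinitions.R.

Definition std_simplex (q : nat) : set 'rV[RR]_(q.+1) :=
  [set x | (forall i, 0 <= x ord0 i) /\ \sum_i x ord0 i = 1].
Arguments std_simplex q : clear implicits.

(* The i-th face map Delta_q -> Delta_(q+1): insert a 0 at coordinate i. *)
Definition face_vec (q : nat) (i : 'I_(q.+2)) (x : 'rV[RR]_(q.+1))
  : 'rV[RR]_(q.+2) :=
  \row_(j < q.+2) (if unlift i j is Some k then x ord0 k else 0).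

Section Singular.
Variables (F : fieldType) (X : topologicalType).

(* A singular q-simplex is represented by a map R^(q+1) -> X; only its
   restriction to Delta_q matters (two representatives agreeing on
   Delta_q denote the same simplex, see [coef]). *)
Definition sing (q : nat) := 'rV[RR]_(q.+1) -> X.

(* Formal F-linear combinations of singular simplices. *)
Definition chain (q : nat) := seq (F * sing q).

Definition same_simplex (q : nat) (s t : sing q) : Prop :=
  forall x, std_simplex q x -> s x = t x.

Definition coef (q : nat) (c : chain q) (t : sing q) : F :=
  \sum_(p <- c) (if `[< same_simplex p.2 t >] then p.1 else 0).

(* Equality of chains (as elements of the free F-vector space). *)
Definition chain_eq (q : nat) (c d : chain q) : Prop :=
  forall t, coef c t = coef d t.

Definition bd (q : nat) (c : chain q.+1) : chain q :=
  flatten [seq [seq ((-1) ^+ (nat_of_ord i) * p.1, p.2 \o @face_vec q i)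
               | i : 'I_(q.+2) <- enum 'I_(q.+2)] | p <- c].

Definition is_chain (Y : set X) (q : nat) (c : chain q) : Prop :=
  forall p, List.In p c ->
    {within std_simplex q, continuous p.2} /\ p.2 @` std_simplex q `<=` Y.

Definition is_cycle (Y : set X) (q : nat) : chain q -> Prop :=
  match q return chain q -> Prop with
  | 0 => fun z => is_chain Y z
  | q'.+1 => fun z => is_chain Y z /\ chain_eq (bd z) [::]
  end.

Definition is_bd (Y : set X) (q : nat) (c : chain q) : Prop :=
  exists d : chain q.+1, is_chain Y d /\ chain_eq (bd d) c.

Definition combo (q k : nat) (a : 'I_k -> F) (z : 'I_k -> chain q) : chain q :=
  flatten [seq [seq (a i * p.1, p.2) | p <- z i] | i <- enum 'I_k].

Definition chain_sub (q : nat) (c d : chain q) : chain q :=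
  c ++ [seq (- p.1, p.2) | p <- d].

(* z_0..z_(k-1) are q-cycles of Y whose classes become linearly
   independent in H_q(Y';F) (i.e. their images under the inclusion-induced
   map H_q(Y) -> H_q(Y') are independent). *)
Definition hindep (Y Y' : set X) (q k : nat) (z : 'I_k -> chain q) : Prop :=
  (forall i, is_cycle Y (z i)) /\
  (forall a : 'I_k -> F, is_bd Y' (combo a z) -> forall i, a i = 0).

End Singular.

(* The maximum of a set of naturals (0 if it has no maximum). *)
Definition maxnat (P : nat -> Prop) : nat :=
  xget 0%N [set d | P d /\ forall k, P k -> (k <= d)%N].

(* rank of H_q(Y;F) -> H_q(Y';F) induced by inclusion (Y ⊆ Y'). *)
Definition rk (F : fieldType) (X : topologicalType) (Y Y' : set X) (q : nat)
  : nat :=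
  maxnat (fun k => exists z : 'I_k -> chain F X q, hindep Y Y' z).

Definition dimH (F : fieldType) (X : topologicalType) (Y : set X) (q : nat)
  : nat := rk F Y Y q.

Definition finH (F : fieldType) (X : topologicalType) (Y : set X) (q : nat)
  : Prop :=
  exists n, forall k (z : 'I_k -> chain F X q), hindep Y Y z -> (k <= n)%N.

(* dim_F of Gamma = {(s1,s2) in H_q(X1) (+) H_q(X2) | rho1 s1 = rho2 s2}:
   elements of Gamma are represented by pairs of cycles (z1,z2) with
   z1 - z2 a boundary in X; independence is taken in H_q(X1) (+) H_q(X2). *)
Definition dimGamma (F : fieldType) (X : topologicalType) (X1 X2 : set X)
  (q : nat) : nat :=
  maxnat (fun k => exists z1 z2 : 'I_k -> chain F X q,
    (forall i, [/\ is_cycle X1 (z1 i), is_cycle X2 (z2 i)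
                 & is_bd setT (chain_sub (z1 i) (z2 i))]) /\
    (forall a : 'I_k -> F, is_bd X1 (combo a z1) -> is_bd X2 (combo a z2) ->
       forall i, a i = 0)).

(* Multiplicity of the barcode (b, d) in the persistent homology P_q of a
   filtration G_0 = emptyset ⊆ G_1 ⊆ ... ⊆ G_n (1 <= b <= n, and
   d = Some j with b < j <= n, or d = None for death +oo), via the rank
   invariant r_{i,j} = rank(rho_{i,j}). *)
Definition bar_mult (F : fieldType) (X : topologicalType) (G : nat -> set X)
  (n q b : nat) (d : option nat) : int :=
  let r i j := (rk F (G i) (G j) q)%:Z in
  match d with
  | None => r b n - r b.-1 n
  | Some j => r b j.-1 - r b.-1 j.-1 - r b j + r b.-1 j
  end.

Definition G1 (X : topologicalType) (X1 X2 : set X) (i : nat) : set X :=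
  match i with
  | 0 => set0
  | 1 => X1
  | 2 => X1 `|` X2
  | _ => setT
  end.

(* Main.v *)
Require Import Defs.
From HB Require Import structures.
From mathcomp Require Import all_boot all_order all_algebra.
From mathcomp Require Import all_classical all_reals all_analysis.
From mathcomp Require Import Rstruct Rstruct_topology.
From mathcomp Require Import ring lra zify.
Set Implicit Arguments.
Unset Strict Implicit.
Unset Printing Implicit Defensive.
Import Order.TTheory GRing.Theory Num.Theory.
Local Open Scope ring_scope.
Local Open Scope classical_set_scope.

Definition vx0 (q : nat) : 'rV[RR]_(q.+1) := \row_j (j == ord0)%:R.

Lemma vx0_simplex q : std_simplex q (vx0 q).
Proof.
split=> [i|]; first by rewrite mxE ler0n.
rewrite (bigD1 ord0) //= big1 ?mxE ?eqxx ?addr0 // => i /negPf Hi.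
by rewrite mxE Hi.
Qed.

Lemma simplex_convex q (x y : 'rV[RR]_(q.+1)) (t : RR) :
  std_simplex q x -> std_simplex q y -> 0 <= t <= 1 ->
  std_simplex q (x + t *: (y - x)).
Proof.
move=> [x0 x1] [y0 y1] /andP[t0 t1]; split=> [i|].
  rewrite !mxE.
  have -> : x 0 i + t * (y 0 i - x 0 i) = (1 - t) * x 0 i + t * y 0 i by ring.
  by apply: addr_ge0; apply: mulr_ge0 => //; rewrite subr_ge0.
under eq_bigr do rewrite !mxE.
rewrite big_split /= -mulr_sumr sumrB x1 y1; ring.
Qed.

Lemma simplex_connected q : connected (std_simplex q).
Proof.
pose seg (y : 'rV[RR]_(q.+1)) :=
  (fun t : RR => vx0 q + t *: (y - vx0 q)) @` `[0, 1].
have -> : std_simplex q = \bigcup_(y in std_simplex q) seg y.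
  apply/seteqP; split=> [y Sy|z [y Sy [t Ht tz]]]; last rewrite -tz.
    exists y => //; exists 1; first by rewrite /= in_itv /= lexx ler01.
    by rewrite scale1r addrC subrK.
  apply: simplex_convex; first exact: vx0_simplex. done.
  by move: Ht; rewrite /= in_itv.
apply: bigcup_connected.
  exists (vx0 q) => y _; exists 0; first by rewrite /= in_itv /= lexx ler01.
  by rewrite scale0r addr0.
move=> y _; apply: connected_continuous_connected; first exact: segment_connected.
apply: continuous_subspaceT => t.
apply: (@continuousD _ _ _ (cst (vx0 q)) (fun t : RR => t *: (y - vx0 q))); first exact: cst_continuous.
exact: continuousZr_tmp.
Qed.

Lemma simplex_side (X : topologicalType) (X1 X2 : set X) q
  (s : 'rV[RR]_(q.+1) -> X) :
  closure X1 `&` closure X2 = set0 -> {within std_simplex q, continuous s} ->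
  s @` std_simplex q `<=` X1 `|` X2 ->
  s @` std_simplex q `<=` X1 \/ s @` std_simplex q `<=` X2.
Proof.
move=> cl cs sub; apply: connected_subset => //.
  split.
    apply/seteqP; split=> // x [c1 x2]; rewrite -cl; split=> //.
    exact: subset_closure.
  apply/seteqP; split=> // x [x1 c2]; rewrite -cl; split=> //.
  exact: subset_closure.
exact: (connected_continuous_connected (@simplex_connected q) cs).
Qed.

Section LA.
Variable F : fieldType.

Lemma row_free0 m n (A : 'M[F]_(m, n)) (x : 'rV_m) :
  row_free A -> x *m A = 0 -> x = 0.
Proof. by move=> fA xA; apply: (row_free_inj fA); rewrite /= mul0mx. Qed.

Lemma row_freeI m n (A : 'M[F]_(m, n)) :
  (forall x : 'rV_m, x *m A = 0 -> x = 0) -> row_free A.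
Proof.
move=> H; rewrite -kermx_eq0; apply/eqP/row_matrixP => i.
by rewrite row0; apply: H; apply/sub_kermxP; exact: row_sub.
Qed.

Lemma row_free_ext k n (M : 'M[F]_(k, n)) (r : 'rV_n) :
  row_free M -> ~~ (r <= M)%MS -> row_free (col_mx M r).
Proof.
move=> fM nr; rewrite /row_free.
have -> : \rank (col_mx M r) = \rank (M + r)%MS by rewrite addsmxE.
have [le1 eq1] := mxrank_leqif_sup (addsmxSl M r).
have lt1 : (\rank M < \rank (M + r))%N.
  by rewrite ltn_neqAle le1 andbT eq1 addsmx_sub submx_refl.
have le2 := (mxrank_adds_leqif M r).1.
have le3 := rank_leq_row r.
move/eqP: fM => fM; rewrite fM in lt1.
rewrite eqn_leq; apply/andP; split; last by rewrite addn1.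
by apply: (leq_trans le2); rewrite fM leq_add2l.
Qed.

Lemma row_free_rank_le j k n (R : 'M[F]_(j, n)) (M : 'M[F]_(k, n)) :
  row_free R -> row_free M -> (R <= M)%MS -> (j <= k)%N.
Proof.
move=> /eqP fR /eqP fM /mxrankS; by rewrite fR fM.
Qed.

Lemma row_free_le j n (R : 'M[F]_(j, n)) : row_free R -> (j <= n)%N.
Proof. move=> /eqP <-; exact: rank_leq_col. Qed.

End LA.

Section Chains.
Variables (F : fieldType) (X : topologicalType).

Definition lin q (g : sing X q -> F) (c : chain F X q) : F :=
  \sum_(p <- c) p.1 * g p.2.

Lemma lin_cat q g (c d : chain F X q) : lin g (c ++ d) = lin g c + lin g d.
Proof. by rewrite /lin big_cat. Qed.

Lemma lin_scale q g (c : chain F X q) a :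
  lin g [seq (a * p.1, p.2) | p <- c] = a * lin g c.
Proof. by rewrite /lin big_map mulr_sumr; apply: eq_bigr => p _; rewrite mulrA. Qed.

Lemma lin_neg q g (c : chain F X q) :
  lin g [seq (- p.1, p.2) | p <- c] = - lin g c.
Proof. by rewrite /lin big_map -sumrN; apply: eq_bigr => p _; rewrite mulNr. Qed.

Lemma lin_sub q g (c d : chain F X q) :
  lin g (chain_sub c d) = lin g c - lin g d.
Proof. by rewrite /chain_sub lin_cat lin_neg. Qed.

Lemma lin_flatten q g (s : seq (chain F X q)) :
  lin g (flatten s) = \sum_(c <- s) lin g c.
Proof.
elim: s => [|c s IH]; first by rewrite big_nil /lin big_nil.
by rewrite big_cons /= lin_cat IH.
Qed.

Lemma lin_combo q g k (a : 'I_k -> F) (z : 'I_k -> chain F X q) :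
  lin g (combo a z) = \sum_i a i * lin g (z i).
Proof.
rewrite /combo lin_flatten big_map big_enum /=.
by apply: eq_bigr => i _; rewrite lin_scale.
Qed.

Definition ind q (t : sing X q) (s : sing X q) : F :=
  if `[< same_simplex s t >] then 1 else 0.

Lemma coefE q (c : chain F X q) t : coef c t = lin (ind t) c.
Proof. by apply: eq_bigr => p _; rewrite /ind; case: ifP; rewrite ?mulr1 ?mulr0. Qed.

Definition bdg q (t : sing X q) (s : sing X q.+1) : F :=
  \sum_(i < q.+2) (-1) ^+ (nat_of_ord i) * ind t (s \o @face_vec q i).

Lemma coef_bd q (c : chain F X q.+1) t : coef (bd c) t = lin (bdg t) c.
Proof.
rewrite coefE /bd lin_flatten big_map; apply: eq_bigr => p _.
rewrite /lin big_map big_enum /= /bdg mulr_sumr; apply: eq_bigr => i _ /=.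
by rewrite mulrA [p.1 * _]mulrC.
Qed.

Lemma coef_cat q (c d : chain F X q) t : coef (c ++ d) t = coef c t + coef d t.
Proof. by rewrite !coefE lin_cat. Qed.

Lemma coef_sub q (c d : chain F X q) t :
  coef (chain_sub c d) t = coef c t - coef d t.
Proof. by rewrite !coefE lin_sub. Qed.

Lemma coef_scale q (c : chain F X q) a t :
  coef [seq (a * p.1, p.2) | p <- c] t = a * coef c t.
Proof. by rewrite !coefE lin_scale. Qed.

Lemma coef_combo q k (a : 'I_k -> F) (z : 'I_k -> chain F X q) t :
  coef (combo a z) t = \sum_i a i * coef (z i) t.
Proof. by rewrite coefE lin_combo; under eq_bigr do rewrite -coefE. Qed.

Lemma coef_bd_cat q (c d : chain F X q.+1) t :
  coef (bd (c ++ d)) t = coef (bd c) t + coef (bd d) t.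
Proof. by rewrite !coef_bd lin_cat. Qed.

Lemma coef_bd_scale q (c : chain F X q.+1) a t :
  coef (bd [seq (a * p.1, p.2) | p <- c]) t = a * coef (bd c) t.
Proof. by rewrite !coef_bd lin_scale. Qed.

Lemma coef_bd_combo q k (a : 'I_k -> F) (z : 'I_k -> chain F X q.+1) t :
  coef (bd (combo a z)) t = \sum_i a i * coef (bd (z i)) t.
Proof. by rewrite coef_bd lin_combo; under eq_bigr do rewrite -coef_bd. Qed.

Lemma In_map (A B : Type) (f : A -> B) (s : seq A) x :
  List.In x (map f s) -> exists y, List.In y s /\ x = f y.
Proof.
elim: s => [|y s IH] /=; [by []|]. case=> [<-|/IH [z [zs ->]]]; first by exists y; split; [left|].
by exists z; split; [right|].
Qed.

Lemma In_cat (A : Type) (s1 s2 : seq A) x :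
  List.In x (s1 ++ s2) -> List.In x s1 \/ List.In x s2.
Proof.
elim: s1 => [|y s IH] /=; first by right.
by case=> [->|/IH [] ?]; [left; left|left; right|right].
Qed.

Lemma In_flatten (A : Type) (s : seq (seq A)) x :
  List.In x (flatten s) -> exists c, List.In c s /\ List.In x c.
Proof.
elim: s => [|c s IH] //=; move/(@In_cat _ c (flatten s)) => [xc|/IH [d [ds xd]]].
  by exists c; split; [left|].
by exists d; split; [right|].
Qed.

Lemma In_filter (A : Type) (P : pred A) (s : seq A) x :
  List.In x (seq.filter P s) -> List.In x s /\ P x.
Proof.
elim: s => [|y s IH] //=; case: ifP => Py /=.
  by case=> [<-|/IH [] ? ?]; [split; [left|]|split; [right|]].
by move/IH => [] ? ?; split; [right|].
Qed.

Lemma is_chain_cat Y q (c d : chain F X q) :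
  is_chain Y c -> is_chain Y d -> is_chain Y (c ++ d).
Proof. by move=> hc hd p /(@In_cat _ c d) [/hc|/hd]. Qed.

Lemma is_chain_map Y q (c : chain F X q) (h : F * sing X q -> F) :
  is_chain Y c -> is_chain Y [seq (h p, p.2) | p <- c].
Proof. by move=> hc p /(@In_map _ _ (fun p => (h p, p.2)) c) [p' [/hc ? ->]]. Qed.

Lemma is_chain_flatten Y q (s : seq (chain F X q)) :
  (forall c, List.In c s -> is_chain Y c) -> is_chain Y (flatten s).
Proof. by move=> hs p /(@In_flatten _ s) [c [/hs hc /hc]]. Qed.

Lemma is_chain_combo Y q k (a : 'I_k -> F) (z : 'I_k -> chain F X q) :
  (forall i, is_chain Y (z i)) -> is_chain Y (combo a z).
Proof.
move=> hz; apply: is_chain_flatten => c /(@In_map _ _ (fun i => [seq (a i * p.1, p.2) | p <- z i]) (enum 'I_k)) [i [_ ->]].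
exact: (@is_chain_map Y q (z i) (fun p => a i * p.1)).
Qed.

Lemma is_chain_sub Y q (c d : chain F X q) :
  is_chain Y c -> is_chain Y d -> is_chain Y (chain_sub c d).
Proof.
move=> hc hd; apply: is_chain_cat => //.
exact: (@is_chain_map Y q d (fun p => - p.1)).
Qed.

Lemma is_chain_mono (Y Y' : set X) q (c : chain F X q) :
  Y `<=` Y' -> is_chain Y c -> is_chain Y' c.
Proof.
move=> YY hc p /hc [h1 h2]; split=> //; exact: subset_trans YY.
Qed.

Lemma is_chain_filter Y q (c : chain F X q) P :
  is_chain Y c -> is_chain Y (seq.filter P c).
Proof. by move=> hc p /(@In_filter _ P c) [/hc]. Qed.

Lemma is_bd_eq Y q (c d : chain F X q) :
  is_bd Y c -> (forall t, coef d t = coef c t) -> is_bd Y d.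
Proof. by move=> [e [he1 he2]] cd; exists e; split=> // t; rewrite he2 cd. Qed.

Lemma is_bd_zero Y q (c : chain F X q) :
  (forall t, coef c t = 0) -> is_bd Y c.
Proof.
move=> c0; exists [::]; split=> // t.
by rewrite c0 /coef /bd /= big_nil.
Qed.

Lemma is_bd_add Y q (c d e : chain F X q) :
  is_bd Y c -> is_bd Y d -> (forall t, coef e t = coef c t + coef d t) ->
  is_bd Y e.
Proof.
move=> [c' [hc1 hc2]] [d' [hd1 hd2]] he; exists (c' ++ d'); split.
  exact: is_chain_cat.
by move=> t; rewrite he coef_bd_cat hc2 hd2.
Qed.

Lemma is_bd_scale Y q (c e : chain F X q) a :
  is_bd Y c -> (forall t, coef e t = a * coef c t) -> is_bd Y e.
Proof.
move=> [c' [hc1 hc2]] he; exists [seq (a * p.1, p.2) | p <- c']; split.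
  exact: (@is_chain_map Y _ c' (fun p => a * p.1)).
by move=> t; rewrite he coef_bd_scale hc2.
Qed.

Lemma is_bd_sum Y q k (a : 'I_k -> F) (z : 'I_k -> chain F X q) e :
  (forall i, is_bd Y (z i)) ->
  (forall t, coef e t = \sum_i a i * coef (z i) t) -> is_bd Y e.
Proof.
move=> hz he; have [d hd] := fin_all_exists hz.
exists (combo a d); split.
  by apply: is_chain_combo => i; case: (hd i).
move=> t; rewrite he coef_bd_combo; apply: eq_bigr => i _.
by case: (hd i) => _ ->.
Qed.

Lemma is_bd_mono (Y Y' : set X) q (c : chain F X q) :
  Y `<=` Y' -> is_bd Y c -> is_bd Y' c.
Proof.
move=> YY [d [hd1 hd2]]; exists d; split=> //; exact: is_chain_mono hd1.
Qed.

Lemma is_cycle_chain Y q (c : chain F X q) : is_cycle Y c -> is_chain Y c.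
Proof. by case: q c => [|q] c //= []. Qed.

Lemma is_cycle_combo Y q k (a : 'I_k -> F) (z : 'I_k -> chain F X q) :
  (forall i, is_cycle Y (z i)) -> is_cycle Y (combo a z).
Proof.
case: q z => [|q] z hz /=.
  by apply: is_chain_combo => i; exact: (is_cycle_chain (hz i)).
split; first by apply: is_chain_combo => i; exact: (is_cycle_chain (hz i)).
move=> t; rewrite coef_bd_combo [RHS]/coef big_nil big1 // => i _.
by case: (hz i) => _ ->; rewrite /coef big_nil mulr0.
Qed.

Lemma is_cycle_mono (Y Y' : set X) q (c : chain F X q) :
  Y `<=` Y' -> is_cycle Y c -> is_cycle Y' c.
Proof.
case: q c => [|q] c YY /=; first exact: is_chain_mono.
by case=> h1 h2; split=> //; exact: is_chain_mono h1.
Qed.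

Lemma face_simplex q (i : 'I_(q.+2)) x :
  std_simplex q x -> std_simplex q.+1 (face_vec i x).
Proof.
move=> [x0 x1]; split=> [j|].
  by rewrite mxE; case: unlift.
rewrite (bigD1_ord i) //= mxE unlift_none add0r -x1.
by apply: eq_bigr => j _; rewrite mxE liftK.
Qed.

Lemma sum_seq_neq0 (A : Type) (s : seq A) (f : A -> F) :
  \sum_(p <- s) f p != 0 -> exists p, List.In p s /\ f p != 0.
Proof.
elim: s => [|p s IH]; first by rewrite big_nil eqxx.
rewrite big_cons; have [fp0|fp0] := eqVneq (f p) 0.
  by rewrite fp0 add0r => /IH [p' [? ?]]; exists p'; split; [right|].
by move=> _; exists p; split; [left|].
Qed.

Lemma sum_ord_neq0 n (f : 'I_n -> F) :
  \sum_i f i != 0 -> exists i, f i != 0.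
Proof.
move=> H; apply: contrapT => H'; move: H; rewrite big1 ?eqxx //.
move=> i _; apply/eqP; apply: contrapT => fi.
apply: H'; exists i; exact/negP.
Qed.

Lemma bd_support Y q (c : chain F X q.+1) t :
  is_chain Y c -> coef (bd c) t != 0 -> Y (t (vx0 q)).
Proof.
move=> hc; rewrite coef_bd => /sum_seq_neq0 [p [pc]].
rewrite /bdg mulf_eq0 negb_or => /andP[_ /sum_ord_neq0 [i]].
rewrite mulf_eq0 negb_or /ind => /andP[_].
case: asboolP => [ss _|]; last by rewrite eqxx.
rewrite -(ss _ (vx0_simplex q)) /=.
have [_ sub] := hc p pc; apply: sub; exists (face_vec i (vx0 q)) => //.
exact: face_simplex (vx0_simplex q).
Qed.

Lemma lin_split q g (z : chain F X q) (P : pred (F * sing X q)) :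
  lin g z = lin g (seq.filter P z) + lin g (seq.filter (predC P) z).
Proof. by rewrite /lin !big_filter (bigID P). Qed.

Lemma cycle_split (X1 X2 : set X) q (z : chain F X q) :
  closure X1 `&` closure X2 = set0 -> is_cycle (X1 `|` X2) z ->
  exists z1 z2, [/\ is_cycle X1 z1, is_cycle X2 z2 &
                    forall t, coef z t = coef z1 t + coef z2 t].
Proof.
move=> cl hz.
have dis : forall x, X1 x -> X2 x -> False.
  move=> x x1 x2; have : (closure X1 `&` closure X2) x.
    by split; apply: subset_closure.
  by rewrite cl.
pose P := fun p : F * sing X q => `[< p.2 @` std_simplex q `<=` X1 >].
have hc := is_cycle_chain hz.
have h1 : is_chain X1 (seq.filter P z).
  move=> p /(@In_filter _ P z) [pz]; rewrite /P => /asboolP Pp.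
  by have [? _] := hc p pz; split.
have h2 : is_chain X2 (seq.filter (predC P) z).
  move=> p /(@In_filter _ (predC P) z) [pz]; rewrite /= /P => /asboolP nPp.
  have [c1 c2] := hc p pz; split=> //.
  by case: (simplex_side cl c1 c2).
exists (seq.filter P z), (seq.filter (predC P) z); split; last first.
- by move=> t; rewrite !coefE (lin_split _ _ P).
- case: q z P hz hc h1 h2 => [|q] z P hz hc h1 h2 //=; split=> // t.
  case: hz => _ /(_ t); rewrite coef_bd (lin_split _ _ P) -!coef_bd.
  rewrite [coef [::] t]/coef big_nil => e.
  have [e2|ne2] := eqVneq (coef (bd (seq.filter (predC P) z)) t) 0; first by [].
  exfalso; have ne1 : coef (bd (seq.filter P z)) t != 0.
    by apply: contra ne2 => /eqP e1; rewrite e1 add0r in e; rewrite e.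
  exact: dis (bd_support h1 ne1) (bd_support h2 ne2).
- case: q z P hz hc h1 h2 => [|q] z P hz hc h1 h2 //=; split=> // t.
  case: hz => _ /(_ t); rewrite coef_bd (lin_split _ _ P) -!coef_bd.
  rewrite [coef [::] t]/coef big_nil => e.
  have [e1|ne1] := eqVneq (coef (bd (seq.filter P z)) t) 0; first by [].
  exfalso; have ne2 : coef (bd (seq.filter (predC P) z)) t != 0.
    by apply: contra ne1 => /eqP e2; rewrite e2 addr0 in e; rewrite e.
  exact: dis (bd_support h1 ne1) (bd_support h2 ne2).
Qed.
Lemma maxnatE (P : nat -> Prop) d :
  P d -> (forall k, P k -> (k <= d)%N) -> maxnat P = d.
Proof.
move=> Pd Hd; rewrite /maxnat; apply: xget_unique; first by split.
move=> y [Py Hy]; apply/eqP; rewrite eqn_leq Hd //=; exact: Hy.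
Qed.

Lemma max_exists (P : nat -> Prop) :
  P 0%N -> (exists n, forall k, P k -> (k <= n)%N) ->
  exists d, P d /\ forall k, P k -> (k <= d)%N.
Proof.
move=> P0 [n Hn].
have ex : exists i, `[< P i >] by exists 0%N; exact/asboolP.
have ub : forall i, `[< P i >] -> (i <= n)%N by move=> i /asboolP; exact: Hn.
case: (ex_maxnP ex ub) => d /asboolP Pd Hd; exists d; split=> // k Pk.
by apply: Hd; exact/asboolP.
Qed.

Lemma hindep0 Y Y' q : hindep Y Y' (fun _ : 'I_0 => [::] : chain F X q).
Proof. by split=> [[]|a _ []]. Qed.

Lemma dim_basis Y q : finH F Y q ->
  exists d (u : 'I_d -> chain F X q),
    [/\ hindep Y Y u, (forall k (z : 'I_k -> chain F X q), hindep Y Y z -> (k <= d)%N)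
      & dimH F Y q = d].
Proof.
move=> [n Hn].
have P0 : exists z : 'I_0 -> chain F X q, hindep Y Y z.
  by exists (fun _ => [::]); exact: hindep0.
have Pb : exists n, forall k, (exists z : 'I_k -> chain F X q, hindep Y Y z) -> (k <= n)%N.
  by exists n => k [z hz]; exact: Hn hz.
have [d [[u hu] Hd]] := max_exists P0 Pb.
exists d, u; split=> //.
  by move=> k z hz; apply: Hd; exists z.
by apply: maxnatE; [exists u|].
Qed.

Lemma span_max Y q d (u : 'I_d -> chain F X q) :
  hindep Y Y u ->
  (forall k (z : 'I_k -> chain F X q), hindep Y Y z -> (k <= d)%N) ->
  forall z, is_cycle Y z -> exists a : 'I_d -> F, is_bd Y (chain_sub z (combo a u)).
Proof.
move=> [uc ui] Hd z zc.
pose u' : 'I_d.+1 -> chain F X q :=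
  fun i => if unlift ord_max i is Some j then u j else z.
have u'c : forall i, is_cycle Y (u' i).
  by move=> i; rewrite /u'; case: unlift.
have [b [hb [i bi]]] : exists b, is_bd Y (combo b u') /\ exists i, b i != 0.
  apply: contrapT => H.
  have : (d.+1 <= d)%N.
    apply: (Hd _ u'); split=> // b hb i; apply: contrapT => bi; apply: H.
    by exists b; split=> //; exists i; apply/eqP.
  by rewrite ltnn.
have coefu' : forall t, coef (combo b u') t =
    b ord_max * coef z t + \sum_j b (lift ord_max j) * coef (u j) t.
  move=> t; rewrite coef_combo (bigD1_ord ord_max) //= /u' unlift_none.
  by congr (_ + _); apply: eq_bigr => j _; rewrite liftK.
have [c0|c0] := eqVneq (b ord_max) 0.
  exfalso.
  have hb' : is_bd Y (combo (fun j => b (lift ord_max j)) u).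
    by apply: (is_bd_eq hb) => t; rewrite coefu' c0 mul0r add0r coef_combo.
  have := ui _ hb'; move: bi; case: (unliftP ord_max i) => [j ->|->].
    by move=> /negP bj /(_ j) /eqP.
  by rewrite c0 eqxx.
exists (fun j => - (b (lift ord_max j) / b ord_max)).
apply: (is_bd_scale (a := (b ord_max)^-1) hb) => t.
rewrite coef_sub coef_combo coefu' mulrDr mulrA mulVf // mul1r.
rewrite -sumrN mulr_sumr; congr (_ + _); apply: eq_bigr => j _.
by rewrite mulNr opprK mulrA [_^-1 * _]mulrC.
Qed.

End Chains.

Section Main.
Variables (F : fieldType) (X : topologicalType) (X1 X2 : set X) (q : nat).
Variables (d1 d2 : nat) (u : 'I_d1 -> chain F X q) (v : 'I_d2 -> chain F X q).
Hypotheses (hu : hindep X1 X1 u) (hv : hindep X2 X2 v).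
Hypotheses (mu : forall k (z : 'I_k -> chain F X q), hindep X1 X1 z -> (k <= d1)%N).
Hypotheses (mv : forall k (z : 'I_k -> chain F X q), hindep X2 X2 z -> (k <= d2)%N).
Hypothesis cl : closure X1 `&` closure X2 = set0.

Definition w (i : 'I_(d1 + d2)) : chain F X q :=
  match fintype.split i with inl j => u j | inr j => v j end.

Definition Wc (r : 'rV[F]_(d1 + d2)) := combo (fun i => r 0 i) w.

Lemma w_l l : w (lshift d2 l) = u l.
Proof. by rewrite /w -[lshift d2 l]/(unsplit (inl l)) unsplitK. Qed.

Lemma w_r l : w (rshift d1 l) = v l.
Proof. by rewrite /w -[rshift d1 l]/(unsplit (inr l)) unsplitK. Qed.

Lemma coef_Wc r t : coef (Wc r) t =
  \sum_l r 0 (lshift d2 l) * coef (u l) t + \sum_l r 0 (rshift d1 l) * coef (v l) t.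
Proof.
rewrite coef_combo big_split_ord /=.
by congr (_ + _); apply: eq_bigr => l _; rewrite ?w_l ?w_r.
Qed.

Lemma coef_Wc_mul k (x : 'rV[F]_k) (R : 'M[F]_(k, d1 + d2)) t :
  coef (Wc (x *m R)) t = \sum_j x 0 j * coef (Wc (row j R)) t.
Proof.
rewrite coef_combo.
under eq_bigr do rewrite mxE mulr_suml.
rewrite exchange_big /=; apply: eq_bigr => j _.
rewrite coef_combo mulr_sumr; apply: eq_bigr => i _.
by rewrite mxE mulrA.
Qed.

Definition K (r : 'rV[F]_(d1 + d2)) := is_bd [set: X] (Wc r).

Lemma K_mul k (x : 'rV[F]_k) (R : 'M[F]_(k, d1 + d2)) :
  (forall j, K (row j R)) -> K (x *m R).
Proof. by move=> hR; apply: (is_bd_sum (a := fun j => x 0 j) hR) => t; rewrite coef_Wc_mul. Qed.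

Lemma w_cycle i : is_cycle (X1 `|` X2) (w i).
Proof.
rewrite /w; case: fintype.split => j.
  by apply: (is_cycle_mono (Y := X1)); [move=> ? ?; left|case: hu].
by apply: (is_cycle_mono (Y := X2)); [move=> ? ?; right|case: hv].
Qed.

Lemma Wc_cycle r : is_cycle (X1 `|` X2) (Wc r).
Proof. apply: is_cycle_combo; exact: w_cycle. Qed.

Lemma K_basis : exists k (M : 'M[F]_(k, d1 + d2)),
  [/\ row_free M, forall j, K (row j M) & forall r, K r -> (r <= M)%MS].
Proof.
pose P k := exists M : 'M[F]_(k, d1 + d2), row_free M /\ forall j, K (row j M).
have P0 : P 0%N.
  exists 0; split=> [|[]//].
  by rewrite /row_free eqn_leq rank_leq_row.
have Pb : exists n, forall k, P k -> (k <= n)%N.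
  by exists (d1 + d2)%N => k [M [fM _]]; exact: row_free_le fM.
have [k [[M [fM KM]] Hk]] := max_exists P0 Pb.
exists k, M; split=> // r Kr; apply: contrapT => /negP nr.
have : (k.+1 <= k)%N.
  rewrite -addn1; apply: Hk; exists (col_mx M r); split.
    exact: row_free_ext.
  move=> j; rewrite -[j]splitK; case: (fintype.split j) => l /=.
    by rewrite rowKu.
  rewrite rowKd (ord1 l).
  suff -> : row 0 r = r by [].
  by apply/rowP => i; rewrite mxE.
by rewrite ssrnat.ltnn.
Qed.


Variables (k : nat) (M : 'M[F]_(k, d1 + d2)).
Hypotheses (fM : row_free M) (KM : forall j, K (row j M))
  (spanM : forall r, K r -> (r <= M)%MS).

Lemma K_le j (R : 'M[F]_(j, d1 + d2)) :
  row_free R -> (forall i, K (row i R)) -> (j <= k)%N.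
Proof.
move=> fR KR; apply: (row_free_rank_le fR fM).
by apply/row_subP => i; apply: spanM.
Qed.

Lemma rk_ge : exists y : 'I_(\rank (M^C)%MS) -> chain F X q,
  hindep (X1 `|` X2) [set: X] y.
Proof.
pose B := row_base (M^C)%MS.
exists (fun j => Wc (row j B)); split=> [j|c hc i]; first exact: Wc_cycle.
pose xc : 'rV[F]_(\rank (M^C)%MS) := \row_j c j.
have KB : K (xc *m B).
  apply: (is_bd_eq hc) => t; rewrite coef_Wc_mul coef_combo.
  by apply: eq_bigr => j _; rewrite mxE.
have : (xc *m B <= M :&: M^C)%MS.
  rewrite sub_capmx spanM //=.
  by rewrite -(eq_row_base (M^C)%MS) submxMl.
rewrite capmx_compl submx0 => /eqP /(row_free0 (row_base_free _)) xc0.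
by have := congr1 (fun mm : 'rV[F]_(\rank (M^C)%MS) => mm 0 i) xc0; rewrite !mxE.
Qed.

Lemma rk_le m (y : 'I_m -> chain F X q) :
  hindep (X1 `|` X2) [set: X] y -> (m + k <= d1 + d2)%N.
Proof.
move=> [yc yi].
have hr : forall j, exists r, is_bd [set: X] (chain_sub (y j) (Wc r)).
  move=> j; have [z1 [z2 [c1 c2 ez]]] := cycle_split cl (yc j).
  have [a ha] := span_max hu mu c1.
  have [b hb] := span_max hv mv c2.
  exists (row_mx (\row_l a l) (\row_l b l)).
  apply: (is_bd_add (is_bd_mono (Y' := [set: X]) _ ha)
                    (is_bd_mono (Y' := [set: X]) _ hb)) => // t.
  rewrite !coef_sub coef_Wc ez !coef_combo.
  under eq_bigr do rewrite row_mxEl mxE.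
  under [\sum_l _ * coef (v l) t]eq_bigr do rewrite row_mxEr mxE.
  by ring.
have [rf hrf] := fin_all_exists hr.
pose R : 'M[F]_(m, d1 + d2) := \matrix_j rf j.
have := @row_free_le _ _ _ (col_mx R M); apply.
apply: row_freeI => x.
rewrite -[x]hsubmxK mul_row_col.
set c := lsubmx x; set e := rsubmx x => H.
have KcR : K (c *m R).
  have -> : c *m R = (- e) *m M by rewrite mulNmx; apply/eqP; rewrite -addr_eq0 H.
  exact: K_mul.
have : is_bd [set: X] (combo (fun j => c 0 j) y).
  have hs : is_bd [set: X] (combo (fun j => c 0 j) (fun j => chain_sub (y j) (Wc (rf j)))).
    by apply: (is_bd_sum hrf) => t; rewrite coef_combo.
  apply: (is_bd_add hs KcR) => t.
  rewrite coef_Wc_mul !coef_combo -big_split /=; apply: eq_bigr => j _.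
  by rewrite coef_sub rowK mulrBr subrK.
move=> /yi c0.
have c00 : c = 0 by apply/rowP => j; rewrite [RHS]mxE; exact: c0.
move: H; rewrite c00 mul0mx add0r => /(row_free0 fM) ->.
by rewrite row_mx0.
Qed.

Lemma coef_combo_combo j p (x : 'I_j -> F) (A : 'I_j -> 'I_p -> F)
  (z : 'I_p -> chain F X q) t :
  coef (combo x (fun i => combo (A i) z)) t =
  \sum_l (\sum_i x i * A i l) * coef (z l) t.
Proof.
rewrite coef_combo; under eq_bigr do rewrite coef_combo mulr_sumr.
rewrite exchange_big /=; apply: eq_bigr => l _.
by rewrite mulr_suml; apply: eq_bigr => i _; rewrite mulrA.
Qed.

Lemma is_bd_lin3 Y (c1 c2 c3 e : chain F X q) :
  is_bd Y c1 -> is_bd Y c2 -> is_bd Y c3 ->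
  (forall t, coef e t = coef c1 t - coef c2 t + coef c3 t) -> is_bd Y e.
Proof.
move=> h1 h2 h3 he.
have h2' : is_bd Y [seq (- p.1, p.2) | p <- c2].
  apply: (is_bd_scale (a := -1) h2) => t.
  by rewrite !coefE lin_neg mulN1r.
have h12 : is_bd Y (chain_sub c1 c2).
  by apply: (is_bd_add h1 h2') => t; rewrite coef_cat.
by apply: (is_bd_add h12 h3) => t; rewrite he coef_sub.
Qed.

Definition PG j := exists z1 z2 : 'I_j -> chain F X q,
    (forall i, [/\ is_cycle X1 (z1 i), is_cycle X2 (z2 i)
                 & is_bd setT (chain_sub (z1 i) (z2 i))]) /\
    (forall a : 'I_j -> F, is_bd X1 (combo a z1) -> is_bd X2 (combo a z2) ->
       forall i, a i = 0).

Lemma gam_le j : PG j -> (j <= k)%N.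
Proof.
move=> [z1 [z2 [hz hind]]].
have h : forall i, exists ab : ('I_d1 -> F) * ('I_d2 -> F),
    is_bd X1 (chain_sub (z1 i) (combo ab.1 u)) /\
    is_bd X2 (chain_sub (z2 i) (combo ab.2 v)).
  move=> i; have [c1 c2 _] := hz i.
  have [a ha] := span_max hu mu c1.
  have [b hb] := span_max hv mv c2.
  by exists (a, b).
have [f hf] := fin_all_exists h.
pose R : 'M[F]_(j, d1 + d2) :=
  \matrix_i row_mx (\row_l (f i).1 l) (- \row_l (f i).2 l).
apply: (@K_le _ R).
  apply: row_freeI => x xR.
  have eL : forall l, \sum_i x 0 i * (f i).1 l = 0.
    move=> l; have := congr1 (fun mm : 'rV[F]_(d1 + d2) => mm 0 (lshift d2 l)) xR.
    rewrite /= !mxE => e0; rewrite -[RHS]e0; apply: eq_bigr => i _.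
    by rewrite /R mxE row_mxEl mxE.
  have eR : forall l, \sum_i x 0 i * (f i).2 l = 0.
    move=> l; have := congr1 (fun mm : 'rV[F]_(d1 + d2) => mm 0 (rshift d1 l)) xR.
    rewrite /= !mxE => e0.
    have e1 : \sum_j0 x 0 j0 * R j0 (rshift d1 l) = - \sum_i x 0 i * (f i).2 l.
      rewrite -sumrN; apply: eq_bigr => i _.
      by rewrite /R mxE row_mxEr !mxE mulrN.
    by move/eqP: e0; rewrite e1 oppr_eq0 => /eqP.
  have b1 : is_bd X1 (combo (fun i => x 0 i) z1).
    have hs : is_bd X1 (combo (fun i => x 0 i) (fun i => chain_sub (z1 i) (combo (f i).1 u))).
      by apply: (is_bd_sum (fun i => (hf i).1)) => t; rewrite coef_combo.
    apply: (is_bd_eq hs) => t.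
    rewrite coef_combo; symmetry; rewrite coef_combo.
    under eq_bigr do rewrite coef_sub mulrBr.
    rewrite sumrB.
    have -> : \sum_i x 0 i * coef (combo (f i).1 u) t = 0.
      rewrite -coef_combo coef_combo_combo big1 // => l _.
      by rewrite eL mul0r.
    by rewrite subr0.
  have b2 : is_bd X2 (combo (fun i => x 0 i) z2).
    have hs : is_bd X2 (combo (fun i => x 0 i) (fun i => chain_sub (z2 i) (combo (f i).2 v))).
      by apply: (is_bd_sum (fun i => (hf i).2)) => t; rewrite coef_combo.
    apply: (is_bd_eq hs) => t.
    rewrite coef_combo; symmetry; rewrite coef_combo.
    under eq_bigr do rewrite coef_sub mulrBr.
    rewrite sumrB.
    have -> : \sum_i x 0 i * coef (combo (f i).2 v) t = 0.
      rewrite -coef_combo coef_combo_combo big1 // => l _.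
      by rewrite eR mul0r.
    by rewrite subr0.
  by apply/rowP => i; rewrite mxE; apply: hind b1 b2 i.
move=> i; rewrite rowK.
have [c1 c2 c12] := hz i.
apply: (is_bd_lin3 c12 (is_bd_mono (Y' := [set: X]) _ (hf i).1)
                        (is_bd_mono (Y' := [set: X]) _ (hf i).2)) => // t.
rewrite !coef_sub coef_Wc !coef_combo.
under eq_bigr do rewrite row_mxEl mxE.
under [\sum_l _ * coef (v l) t]eq_bigr do rewrite row_mxEr !mxE mulNr.
rewrite sumrN; ring.
Qed.

Lemma gam_k : PG k.
Proof.
exists (fun i => combo (fun l => M i (lshift d2 l)) u),
       (fun i => combo (fun l => - M i (rshift d1 l)) v); split.
  move=> i; split.
  - by apply: is_cycle_combo; case: hu.
  - by apply: is_cycle_combo; case: hv.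
  - apply: (is_bd_eq (KM i)) => t.
    rewrite coef_sub coef_Wc !coef_combo -sumrN.
    congr (_ + _); apply: eq_bigr => l _; by rewrite ?mxE ?mulNr ?opprK.
move=> a h1 h2.
have eL : forall l, \sum_i a i * M i (lshift d2 l) = 0.
  case: hu => _ hi; apply: hi; apply: (is_bd_eq h1) => t.
  by rewrite coef_combo coef_combo_combo.
have eR : forall l, \sum_i a i * M i (rshift d1 l) = 0.
  case: hv => _ hi l; apply/eqP; rewrite -oppr_eq0 -sumrN; apply/eqP.
  under eq_bigr do rewrite -mulrN.
  move: l; apply: hi; apply: (is_bd_eq h2) => t.
  by rewrite coef_combo coef_combo_combo.
have xa0 : (\row_i a i) *m M = 0.
  apply/rowP => p; rewrite -[p]splitK; case: (fintype.split p) => l /=; rewrite !mxE.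
    by rewrite -[RHS](eL l); apply: eq_bigr => i _; rewrite mxE.
  by rewrite -[RHS](eR l); apply: eq_bigr => i _; rewrite mxE.
move=> i; have := row_free0 fM xa0.
move/(congr1 (fun mm : 'rV[F]_k => mm 0 i)); by rewrite !mxE.
Qed.

End Main.

Unset Implicit Arguments.

Theorem mainTheorem2 (F : fieldType) (X : topologicalType) (X1 X2 : set X)
  (q : nat) :
  closure X1 `&` closure X2 = set0 ->
  finH F X1 q -> finH F X2 q -> finH F [set: X] q ->
  bar_mult F (G1 X1 X2) 3 q 3 None =
    (dimH F [set: X] q)%:Z - (dimH F X1 q)%:Z - (dimH F X2 q)%:Z
    + (dimGamma F X1 X2 q)%:Z.
Proof.
move=> cl f1 f2 fT.
have [d1 [u [hu mu e1]]] := dim_basis f1.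
have [d2 [v [hv mv e2]]] := dim_basis f2.
have [k [M [fM KM spanM]]] := K_basis u v.
have eG : dimGamma F X1 X2 q = k.
  apply: maxnatE; first exact: (gam_k hu hv fM KM).
  by move=> j; exact: (gam_le hu hv mu mv fM spanM).
have kn : (k <= d1 + d2)%N := row_free_le fM.
have eR : rk F (X1 `|` X2) [set: X] q = (d1 + d2 - k)%N.
  apply: maxnatE.
    have := rk_ge hu hv spanM; rewrite mxrank_compl (eqP fM).
    by move=> [y hy]; exists y.
  move=> m [y hy]; have := rk_le hu hv mu mv cl fM KM hy.
  by rewrite leq_subRL // addnC.
rewrite e1 e2 eG /bar_mult /= /dimH eR.
lia.
Qed.
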